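(* Let $b(z)=\prod_{j=1}^nb_{\alpha_j}(z)$ be a finite Blaschke product, $b_{\alpha_j}(z)=\frac{z-\alpha_j}{1-\bar\alpha_jz}$, $\alpha_j\in\mathbb{D}$, and let $\epsilon(b)=\min\{1-|\alpha_j|:1\le j\le n\}$. Then for $1\le\mathfrak p<2$ there is a constant $C$ depending only on $\mathfrak p$ and $n$ such that $\|b\|^2_{D_{\mathfrak p}}\le C\,\epsilon(b)^{1-\mathfrak p}$.
   Context: For $\alpha\in\mathbb{R}$, the one-variable Dirichlet-type space $D_\alpha$ consists of holomorphic $f(z)=\sum_{k\ge0}a_kz^k$ on $\mathbb{D}$ with $\|f\|^2_{D_\alpha}=\sum_{k\ge0}(k+1)^\alpha|a_k|^2<\infty$. *)

(* Defs.v *)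
From Stdlib Require Import Reals Lra.
Open Scope R_scope.

Definition Cx : Type := (R * R)%type.
Definition Cre (z : Cx) : R := fst z.
Definition Cim (z : Cx) : R := snd z.
Definition C0x : Cx := (0, 0).
Definition C1x : Cx := (1, 0).
Definition Caddx (z w : Cx) : Cx := (fst z + fst w, snd z + snd w).
Definition Coppx (z : Cx) : Cx := (- fst z, - snd z).
Definition Cmulx (z w : Cx) : Cx :=
  (fst z * fst w - snd z * snd w, fst z * snd w + snd z * fst w).
Definition Cconjx (z : Cx) : Cx := (fst z, - snd z).
Definition Cscalex (r : R) (z : Cx) : Cx := (r * fst z, r * snd z).
Fixpoint Cpowx (z : Cx) (k : nat) : Cx :=
  match k with O => C1x | S j => Cmulx z (Cpowx z j) end.
Definition Cnorm2 (z : Cx) : R := fst z * fst z + snd z * snd z.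
Definition Cabsx (z : Cx) : R := sqrt (Cnorm2 z).

(* sum_{i=0}^{k} f i *)
Fixpoint Csumx (f : nat -> Cx) (k : nat) : Cx :=
  match k with O => f O | S j => Caddx (Csumx f j) (f (S k - 1)%nat) end.

Definition Cconv (f g : nat -> Cx) (k : nat) : Cx :=
  Csumx (fun i => Cmulx (f i) (g (k - i)%nat)) k.

(* Taylor coefficients at 0 of b_a(z) = (z - a)/(1 - conj(a) z), |a| < 1:
   coefficient 0 is -a, coefficient j+1 is (1-|a|^2) conj(a)^j. *)
Definition blaschke_coef (a : Cx) (k : nat) : Cx :=
  match k with
  | O => Coppx a
  | S j => Cscalex (1 - Cnorm2 a) (Cpowx (Cconjx a) j)
  end.

(* Taylor coefficients of b = prod_{j<n} b_{alpha j} *)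
Fixpoint bcoef (alpha : nat -> Cx) (n : nat) : nat -> Cx :=
  match n with
  | O => fun k => match k with O => C1x | _ => C0x end
  | S m => Cconv (bcoef alpha m) (blaschke_coef (alpha m))
  end.

Fixpoint epsb (alpha : nat -> Cx) (n : nat) : R :=
  match n with
  | O => 1
  | S O => 1 - Cabsx (alpha O)
  | S m => Rmin (epsb alpha m) (1 - Cabsx (alpha m))
  end.

(* ||f||^2_{D_p} summand for coefficient sequence a *)
Definition Dterm (p : R) (a : nat -> Cx) (k : nat) : R :=
  Rpower (INR (k + 1)) p * Cnorm2 (a k).

(* Main.v *)
Require Import Defs.
From Stdlib Require Import Reals Lra Lia.
Open Scope R_scope.

Lemma exp_mono x y : x <= y -> exp x <= exp y.
Proof. intros [H|H]. left; apply exp_increasing; auto. subst; lra. Qed.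

Lemma ln_mono x y : 0 < x -> x <= y -> ln x <= ln y.
Proof. intros Hx [H|H]. left; apply ln_increasing; auto. subst; lra. Qed.

Lemma Cnorm2_ge0 z : 0 <= Cnorm2 z.
Proof. unfold Cnorm2; nra. Qed.
Lemma Cabsx_ge0 z : 0 <= Cabsx z.
Proof. apply sqrt_pos. Qed.
Lemma Cabsx_sq z : Cnorm2 z = Cabsx z * Cabsx z.
Proof. unfold Cabsx; rewrite sqrt_sqrt; auto using Cnorm2_ge0. Qed.
Lemma Cabsx_mul z w : Cabsx (Cmulx z w) = Cabsx z * Cabsx w.
Proof.
  unfold Cabsx; rewrite <- sqrt_mult by apply Cnorm2_ge0. f_equal.
  unfold Cnorm2, Cmulx; simpl; ring.
Qed.
Lemma Cabsx_add z w : Cabsx (Caddx z w) <= Cabsx z + Cabsx w.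
Proof.
  destruct z as [a b], w as [c d]. unfold Cabsx, Cnorm2, Caddx; simpl.
  pose proof (sqrt_cauchy a b c d) as Hc. unfold Rsqr in Hc.
  assert (H0 : 0 <= sqrt (a*a+b*b)) by apply sqrt_pos.
  assert (H1 : 0 <= sqrt (c*c+d*d)) by apply sqrt_pos.
  rewrite <- (sqrt_Rsqr (sqrt (a * a + b * b) + sqrt (c * c + d * d))) by lra.
  assert (E1 : sqrt (a*a+b*b) * sqrt (a*a+b*b) = a*a+b*b) by (apply sqrt_sqrt; nra).
  assert (E2 : sqrt (c*c+d*d) * sqrt (c*c+d*d) = c*c+d*d) by (apply sqrt_sqrt; nra).
  apply sqrt_le_1.
  - pose proof (Rle_0_sqr (a+c)); pose proof (Rle_0_sqr (b+d)); unfold Rsqr in *; lra.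
  - apply Rle_0_sqr.
  - unfold Rsqr. nra.
Qed.
Lemma Cabsx_opp z : Cabsx (Coppx z) = Cabsx z.
Proof. unfold Cabsx, Cnorm2, Coppx; simpl; f_equal; ring. Qed.
Lemma Cabsx_conj z : Cabsx (Cconjx z) = Cabsx z.
Proof. unfold Cabsx, Cnorm2, Cconjx; simpl; f_equal; ring. Qed.
Lemma Cabsx_scale s z : Cabsx (Cscalex s z) = Rabs s * Cabsx z.
Proof.
  unfold Cabsx, Cnorm2, Cscalex; simpl.
  rewrite <- sqrt_Rsqr_abs, <- sqrt_mult by (unfold Rsqr; nra).
  f_equal; unfold Rsqr; ring.
Qed.
Lemma Cabsx_C1 : Cabsx C1x = 1.
Proof. unfold Cabsx, Cnorm2, C1x; simpl. replace (1*1+0*0) with 1 by ring. apply sqrt_1. Qed.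
Lemma Cabsx_C0 : Cabsx C0x = 0.
Proof. unfold Cabsx, Cnorm2, C0x; simpl. replace (0*0+0*0) with 0 by ring. apply sqrt_0. Qed.
Lemma Cabsx_pow z j : Cabsx (Cpowx z j) = Cabsx z ^ j.
Proof.
  induction j; simpl. apply Cabsx_C1. rewrite Cabsx_mul, IHj; ring.
Qed.
Lemma Csumx_abs h k : Cabsx (Csumx h k) <= sum_f_R0 (fun i => Cabsx (h i)) k.
Proof.
  induction k; simpl. lra.
  eapply Rle_trans. apply Cabsx_add. replace (S (S k) - 1)%nat with (S k) by lia.
  simpl in *. lra.
Qed.

Definition rconv (f g : nat -> R) (k : nat) : R :=
  sum_f_R0 (fun i => f i * g (k - i)%nat) k.

Lemma Cconv_abs F G k :
  Cabsx (Cconv F G k) <= rconv (fun i => Cabsx (F i)) (fun i => Cabsx (G i)) k.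
Proof.
  unfold Cconv, rconv. eapply Rle_trans. apply Csumx_abs.
  right. apply sum_eq; intros; apply Cabsx_mul.
Qed.




Lemma sumS f n : sum_f_R0 f (S n) = sum_f_R0 f n + f (S n).
Proof. reflexivity. Qed.

Lemma rev_sum h k : sum_f_R0 (fun i => h (k - i)%nat) k = sum_f_R0 h k.
Proof.
  induction k. reflexivity.
  rewrite decomp_sum by lia. simpl Init.Nat.pred.
  replace (sum_f_R0 (fun i => h (S k - S i)%nat) k) with (sum_f_R0 (fun i => h (k - i)%nat) k)
    by (apply sum_eq; intros; f_equal).
  rewrite IHk, sumS. replace (S k - 0)%nat with (S k) by lia. ring.
Qed.

Lemma swap_sum (h : nat -> nat -> R) K :
  sum_f_R0 (fun k => sum_f_R0 (fun i => h i (k - i)%nat) k) K =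
  sum_f_R0 (fun i => sum_f_R0 (fun j => h i j) (K - i)%nat) K.
Proof.
  induction K. reflexivity.
  rewrite (sumS (fun k => sum_f_R0 (fun i => h i (k - i)%nat) k) K), IHK.
  rewrite (sumS (fun i => sum_f_R0 (fun j => h i j) (S K - i)) K).
  rewrite (sum_eq (fun i => sum_f_R0 (fun j => h i j) (S K - i)) 
                  (fun i => sum_f_R0 (fun j => h i j) (K - i) + h i (S K - i)%nat)).
  2:{ intros i Hi. replace (S K - i)%nat with (S (K - i)) by lia. rewrite sumS. 
      replace (S (K - i)) with (S K - i)%nat by lia. reflexivity. }
  rewrite sum_plus. rewrite (sumS (fun i => h i (S K - i)%nat) K).
  replace (S K - S K)%nat with 0%nat by lia. simpl (sum_f_R0 _ 0).
  ring.
Qed.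

Lemma CS_weighted (x g : nat -> R) n : (forall i, 0 <= g i) ->
  (sum_f_R0 (fun i => x i * g i) n)^2 <=
  sum_f_R0 g n * sum_f_R0 (fun i => x i ^ 2 * g i) n.
Proof.
  intros Hg. induction n.
  - simpl. specialize (Hg 0%nat). nra.
  - rewrite !sumS.
    set (A := sum_f_R0 g n) in *. set (B := sum_f_R0 (fun i => x i * g i) n) in *.
    set (C := sum_f_R0 (fun i => x i ^ 2 * g i) n) in *.
    assert (HA : 0 <= A) by (apply cond_pos_sum; auto).
    assert (HC : 0 <= C) by (apply cond_pos_sum; intros; specialize (Hg n0); nra).
    set (y := x (S n)). set (w := g (S n)). assert (Hw : 0 <= w) by apply Hg.
    assert (HQ : 0 <= A * y^2 - 2 * B * y + C).
    { destruct HA as [HA|HA].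
      - assert (HAQ : A * (A * y^2 - 2 * B * y + C) = (A*y - B)^2 + (A*C - B^2)) by ring.
        assert (0 <= A * (A * y^2 - 2 * B * y + C)) by (rewrite HAQ; pose proof (pow2_ge_0 (A*y-B)); lra).
        nra.
      - assert (HB2 : B^2 <= 0) by (rewrite <- HA in IHn; lra).
        assert (HB0 : B = 0) by nra. rewrite HB0, <- HA. nra. }
    nra.
Qed.

Lemma scal_l c a n : sum_f_R0 (fun i => c * a i) n = c * sum_f_R0 a n.
Proof. rewrite scal_sum. apply sum_eq; intros; ring. Qed.

Lemma rconv_comm f g k : rconv f g k = rconv g f k.
Proof.
  unfold rconv. rewrite <- (rev_sum (fun i => f i * g (k - i)%nat)).
  apply sum_eq; intros i Hi. replace (k - (k - i))%nat with i by lia. ring.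
Qed.

Lemma rconv_ge0 f g k : (forall i, 0 <= f i) -> (forall i, 0 <= g i) -> 0 <= rconv f g k.
Proof. intros; apply cond_pos_sum; intros; apply Rmult_le_pos; auto. Qed.

Lemma L1 f g F G K : (forall i, 0 <= f i) -> (forall i, 0 <= g i) ->
  (forall m, sum_f_R0 f m <= F) -> (forall m, sum_f_R0 g m <= G) ->
  sum_f_R0 (rconv f g) K <= F * G.
Proof.
  intros Hf Hg HF HG. unfold rconv.
  rewrite (swap_sum (fun i j => f i * g j)).
  assert (HG0 : 0 <= G) by (eapply Rle_trans; [apply (cond_pos_sum g 0); auto | apply HG]).
  apply Rle_trans with (sum_f_R0 (fun i => f i * G) K).
  - apply sum_Rle; intros i Hi. rewrite scal_l.
    apply Rmult_le_compat_l; auto.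
  - rewrite <- scal_sum. specialize (HF K). nra.
Qed.

Lemma Young f g G B K : (forall i, 0 <= f i) -> (forall i, 0 <= g i) ->
  (forall m, sum_f_R0 g m <= G) -> (forall m, sum_f_R0 (fun i => f i ^ 2) m <= B) ->
  sum_f_R0 (fun k => (rconv f g k)^2) K <= G * G * B.
Proof.
  intros Hf Hg HG HB.
  assert (HG0 : 0 <= G) by (eapply Rle_trans; [apply (cond_pos_sum g 0); auto | apply HG]).
  apply Rle_trans with
    (sum_f_R0 (fun k => G * sum_f_R0 (fun i => f i ^ 2 * g (k - i)%nat) k) K).
  - apply sum_Rle; intros k Hk. unfold rconv.
    eapply Rle_trans. apply (CS_weighted f (fun i => g (k - i)%nat)); auto.
    apply Rmult_le_compat_r. apply cond_pos_sum; intros; specialize (Hf n); specialize (Hg (k-n)%nat); nra.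
    rewrite rev_sum; auto.
  - rewrite scal_l. rewrite (swap_sum (fun i j => f i ^ 2 * g j)).
    apply Rle_trans with (G * sum_f_R0 (fun i => f i ^ 2 * G) K).
    + apply Rmult_le_compat_l; auto. apply sum_Rle; intros i Hi. rewrite scal_l.
      apply Rmult_le_compat_l; auto. specialize (Hf i); nra.
    + rewrite <- scal_sum. specialize (HB K). nra.
Qed.

Lemma geo_bound x m : 0 <= x < 1 -> sum_f_R0 (fun j => x ^ j) m <= 1 / (1 - x).
Proof.
  intros Hx. rewrite tech3 by lra. unfold Rdiv. apply Rmult_le_compat_r.
  left; apply Rinv_0_lt_compat; lra. pose proof (pow_le x (S m)); lra.
Qed.

Lemma rconv_geo x j : rconv (fun j => x ^ j) (fun j => x ^ j) j = INR (j + 1) * x ^ j.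
Proof.
  unfold rconv. rewrite (sum_eq _ (fun _ => x ^ j)).
  rewrite sum_cte. replace (j+1)%nat with (S j) by lia. ring.
  intros i Hi. rewrite <- pow_add. f_equal. lia.
Qed.

Lemma G1 x m : 0 <= x < 1 -> sum_f_R0 (fun j => INR (j + 1) * x ^ j) m <= 1 / (1 - x)^2.
Proof.
  intros Hx. rewrite <- (sum_eq (rconv (fun j => x ^ j) (fun j => x ^ j))) by (intros; apply rconv_geo).
  replace (1 / (1-x)^2) with ((1/(1-x)) * (1/(1-x))) by (field; lra).
  apply L1; intros; try apply pow_le; try lra; apply geo_bound; auto.
Qed.

Lemma sum_lin j : sum_f_R0 (fun i => INR (i + 1)) j = INR (j + 1) * INR (j + 2) / 2.
Proof.
  induction j. simpl. field. rewrite sumS, IHj.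
  replace (S j + 1)%nat with (j + 2)%nat by lia. replace (S j + 2)%nat with (j + 3)%nat by lia.
  rewrite !plus_INR. simpl. field.
Qed.

Lemma G2 x m : 0 <= x < 1 -> sum_f_R0 (fun j => INR (j + 1) ^ 2 * x ^ j) m <= 2 / (1 - x)^3.
Proof.
  intros Hx.
  apply Rle_trans with (sum_f_R0 (fun j => 2 * rconv (fun j => INR (j + 1) * x ^ j) (fun j => x ^ j) j) m).
  - apply sum_Rle; intros j Hj. unfold rconv.
    rewrite (sum_eq _ (fun i => INR (i + 1) * x ^ j)).
    2:{ intros i Hi. rewrite Rmult_assoc, <- pow_add. do 2 f_equal. lia. }
    rewrite <- scal_sum, sum_lin. rewrite plus_INR. simpl.
    pose proof (pos_INR j). pose proof (pow_le x j ltac:(lra)).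
    replace (j+2)%nat with (j+1+1)%nat by lia. rewrite !plus_INR. simpl. nra.
  - rewrite scal_l. replace (2 / (1-x)^3) with (2 * ((1/(1-x)^2) * (1/(1-x)))) by (field; lra).
    apply Rmult_le_compat_l. lra.
    apply L1; intros; try apply pow_le; try lra.
    apply Rmult_le_pos. apply pos_INR. apply pow_le; lra.
    apply G1; auto. apply geo_bound; auto.
Qed.


Definition beta (a : Cx) (k : nat) : R := Cabsx (blaschke_coef a k).

Lemma beta_ge0 a k : 0 <= beta a k.
Proof. apply Cabsx_ge0. Qed.

Lemma beta0 a : beta a 0 = Cabsx a.
Proof. unfold beta; simpl. apply Cabsx_opp. Qed.

Lemma betaS a j : Cabsx a < 1 -> beta a (S j) = (1 - Cabsx a ^ 2) * Cabsx a ^ j.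
Proof.
  intros H. unfold beta; simpl. rewrite Cabsx_scale, Cabsx_pow, Cabsx_conj, Cabsx_sq.
  pose proof (Cabsx_ge0 a). rewrite Rabs_right by nra. ring.
Qed.

Lemma shift_bound f B : (forall m, sum_f_R0 (fun j => f (S j)) m <= B) -> 0 <= B ->
  forall K, sum_f_R0 f K <= f 0%nat + B.
Proof.
  intros H HB K. destruct K. simpl; lra.
  rewrite decomp_sum by lia. simpl Init.Nat.pred. specialize (H K). lra.
Qed.

Lemma powsq r j : (r ^ j) ^ 2 = (r ^ 2) ^ j.
Proof. rewrite <- !pow_mult. f_equal. lia. Qed.

Lemma INR_j1 j : 1 <= INR (j + 1).
Proof. rewrite plus_INR; simpl; pose proof (pos_INR j); lra. Qed.

Section Beta.
Variable a : Cx.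
Hypothesis Ha : Cabsx a < 1.
Let r := Cabsx a.
Lemma r_ge0 : 0 <= r. Proof. apply Cabsx_ge0. Qed.

Lemma betaSum K : sum_f_R0 (beta a) K <= 3.
Proof.
  pose proof r_ge0. fold r in Ha.
  apply Rle_trans with (beta a 0 + 2).
  apply shift_bound; [|lra]. intros m.
  rewrite (sum_eq _ (fun j => (1 - r^2) * r ^ j)) by (intros; apply betaS; auto).
  rewrite scal_l. apply Rle_trans with ((1 - r^2) * (1 / (1 - r))).
  apply Rmult_le_compat_l. nra. apply geo_bound; lra.
  replace ((1 - r^2) * (1 / (1 - r))) with (1 + r) by (field; lra). lra.
  rewrite beta0. fold r. lra.
Qed.

Lemma betaD1 K : sum_f_R0 (fun k => INR (k + 1) * beta a k ^ 2) K <= 3.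
Proof.
  pose proof r_ge0. fold r in Ha.
  apply Rle_trans with (INR (0+1) * beta a 0 ^ 2 + 2).
  apply shift_bound with (f := fun k => INR (k + 1) * beta a k ^ 2); [|lra]. intros m.
  apply Rle_trans with (sum_f_R0 (fun j => (2 * (1 - r^2)^2) * (INR (j+1) * (r^2)^j)) m).
  - apply sum_Rle; intros j _. rewrite betaS by auto. fold r.
    rewrite Rpow_mult_distr, powsq.
    replace (S j + 1)%nat with (j + 1 + 1)%nat by lia. rewrite (plus_INR (j+1)). simpl INR.
    pose proof (INR_j1 j). pose proof (pow_le (r^2) j ltac:(nra)).
    pose proof (pow2_ge_0 (1 - r^2)).
    assert (HP: 0 <= (1 - r^2)^2 * (r^2)^j) by (apply Rmult_le_pos; auto). nra.
  - rewrite scal_l. apply Rle_trans with (2 * (1 - r^2)^2 * (1 / (1 - r^2)^2)).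
    apply Rmult_le_compat_l. pose proof (pow2_ge_0 (1-r^2)); lra. apply G1; nra.
    right; field. nra.
  - rewrite beta0. fold r. simpl. nra.
Qed.

Lemma betaD2 K : sum_f_R0 (fun k => INR (k + 1) ^ 2 * beta a k ^ 2) K <= 9 / (1 - r).
Proof.
  pose proof r_ge0. fold r in Ha.
  apply Rle_trans with (INR (0+1) ^ 2 * beta a 0 ^ 2 + 8 / (1 - r)).
  apply shift_bound with (f := fun k => INR (k + 1) ^ 2 * beta a k ^ 2).
  2:{ apply Rmult_le_pos; [lra|]. left; apply Rinv_0_lt_compat; lra. }
  intros m.
  apply Rle_trans with (sum_f_R0 (fun j => (4 * (1 - r^2)^2) * (INR (j+1) ^ 2 * (r^2)^j)) m).
  - apply sum_Rle; intros j _. rewrite betaS by auto. fold r.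
    rewrite Rpow_mult_distr, powsq.
    replace (S j + 1)%nat with (j + 1 + 1)%nat by lia. rewrite (plus_INR (j+1)). simpl INR.
    pose proof (INR_j1 j). pose proof (pow_le (r^2) j ltac:(nra)).
    pose proof (pow2_ge_0 (1 - r^2)).
    assert ((INR (j+1) + 1)^2 <= 4 * INR (j+1) ^ 2) by nra.
    assert (HP: 0 <= (1 - r^2)^2 * (r^2)^j) by (apply Rmult_le_pos; auto). nra.
  - rewrite scal_l. apply Rle_trans with (4 * (1 - r^2)^2 * (2 / (1 - r^2)^3)).
    apply Rmult_le_compat_l. pose proof (pow2_ge_0 (1-r^2)); lra. apply G2; nra.
    replace (4 * (1 - r^2)^2 * (2 / (1 - r^2)^3)) with (8 / (1 + r) * / (1 - r)) by (field; nra).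
    unfold Rdiv. apply Rmult_le_compat_r. left; apply Rinv_0_lt_compat; lra.
    replace 8 with (8 * 1) at 2 by ring. apply Rmult_le_compat_l. lra.
    rewrite <- Rinv_1. apply Rinv_le_contravar; lra.
  - rewrite beta0. fold r. simpl.
    assert (1 <= / (1 - r)). { rewrite <- Rinv_1. apply Rinv_le_contravar; lra. }
    unfold Rdiv. nra.
Qed.
End Beta.


Lemma split_pow t u p : 1 <= t -> 0 < u <= 1 -> 1 <= p <= 2 ->
  Rpower t p <= t * Rpower u (1 - p) + t ^ 2 * Rpower u (2 - p).
Proof.
  intros Ht Hu Hp. unfold Rpower.
  assert (Ht0 : 0 < t) by lra.
  assert (HL : 0 <= ln t) by (rewrite <- ln_1; apply ln_mono; lra).
  assert (HM : ln u <= 0) by (rewrite <- ln_1; apply ln_mono; lra).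
  assert (E1 : t * exp ((1 - p) * ln u) = exp (ln t + (1 - p) * ln u))
    by (rewrite exp_plus, exp_ln; lra).
  assert (E2 : t ^ 2 * exp ((2 - p) * ln u) = exp (2 * ln t + (2 - p) * ln u)).
  { rewrite exp_plus. replace (2 * ln t) with (ln t + ln t) by ring.
    rewrite exp_plus, exp_ln by lra. ring. }
  rewrite E1, E2.
  pose proof (exp_pos (ln t + (1 - p) * ln u)). pose proof (exp_pos (2 * ln t + (2 - p) * ln u)).
  destruct (Rle_dec (ln t) (- ln u)).
  - assert (exp (p * ln t) <= exp (ln t + (1 - p) * ln u)) by (apply exp_mono; nra). lra.
  - assert (exp (p * ln t) <= exp (2 * ln t + (2 - p) * ln u)) by (apply exp_mono; nra). lra.
Qed.

Lemma Rpower_2p u p : 0 < u -> Rpower u (2 - p) = Rpower u (1 - p) * u.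
Proof. intros. replace (2 - p) with ((1 - p) + 1) by ring. rewrite Rpower_plus, Rpower_1; auto. Qed.

Lemma Rpower_ge0 x y : 0 <= Rpower x y.
Proof. unfold Rpower. left; apply exp_pos. Qed.

Lemma betaDp a p K : Cabsx a < 1 -> 1 <= p <= 2 ->
  sum_f_R0 (fun k => Rpower (INR (k + 1)) p * beta a k ^ 2) K <= 12 * Rpower (1 - Cabsx a) (1 - p).
Proof.
  intros Ha Hp. pose proof (Cabsx_ge0 a). set (u := 1 - Cabsx a).
  assert (Hu : 0 < u <= 1) by (unfold u; lra).
  apply Rle_trans with (sum_f_R0 (fun k => Rpower u (1 - p) * (INR (k + 1) * beta a k ^ 2)
      + Rpower u (2 - p) * (INR (k + 1) ^ 2 * beta a k ^ 2)) K).
  - apply sum_Rle; intros k _. pose proof (split_pow (INR (k+1)) u p (INR_j1 k) Hu Hp).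
    pose proof (pow2_ge_0 (beta a k)). nra.
  - rewrite sum_plus, !scal_l. pose proof (betaD1 a Ha K). pose proof (betaD2 a Ha K).
    fold u in H1. pose proof (Rpower_ge0 u (1 - p)). pose proof (Rpower_ge0 u (2 - p)).
    apply Rle_trans with (Rpower u (1-p) * 3 + Rpower u (2-p) * (9 / u)).
    apply Rplus_le_compat; apply Rmult_le_compat_l; auto.
    rewrite Rpower_2p by lra. right. field. lra.
Qed.

Lemma Rpower_mono_neg u e q : 0 < e -> e <= u -> q <= 0 -> Rpower u q <= Rpower e q.
Proof.
  intros He Heu Hq. unfold Rpower. apply exp_mono.
  assert (ln e <= ln u) by (apply ln_mono; lra). nra.
Qed.

Lemma Rpower_ge1 e q : 0 < e <= 1 -> q <= 0 -> 1 <= Rpower e q.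
Proof.
  intros He Hq. unfold Rpower. rewrite <- exp_0. apply exp_mono.
  assert (ln e <= 0) by (rewrite <- ln_1; apply ln_mono; lra). nra.
Qed.

Definition wt (p : R) (k : nat) : R := Rpower (INR (k + 1)) (p / 2).

Lemma wt_pos p k : 0 < wt p k.
Proof. unfold wt, Rpower; apply exp_pos. Qed.

Lemma wt_sq p k : wt p k ^ 2 = Rpower (INR (k + 1)) p.
Proof.
  unfold wt. simpl. rewrite Rmult_1_r, <- Rpower_plus. f_equal. field.
Qed.

Lemma subadd a b q : 0 < a -> 0 < b -> 0 < q <= 1 -> Rpower (a + b) q <= Rpower a q + Rpower b q.
Proof.
  intros Ha Hb Hq.
  replace q with (1 + (q - 1)) by ring. rewrite !Rpower_plus, !Rpower_1 by lra.
  assert (Rpower (a + b) (q - 1) <= Rpower a (q - 1)) by (apply Rpower_mono_neg; lra).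
  assert (Rpower (a + b) (q - 1) <= Rpower b (q - 1)) by (apply Rpower_mono_neg; lra).
  nra.
Qed.

Lemma wt_sub p i k : 0 < p <= 2 -> (i <= k)%nat -> wt p k <= wt p i + wt p (k - i).
Proof.
  intros Hp Hik. unfold wt.
  apply Rle_trans with (Rpower (INR (i + 1) + INR (k - i + 1)) (p / 2)).
  - apply Rle_Rpower_l. lra. split. apply lt_0_INR; lia.
    rewrite <- plus_INR. apply le_INR. lia.
  - apply subadd. apply lt_0_INR; lia. apply lt_0_INR; lia. lra.
Qed.


Lemma conv_series f B : (forall k, 0 <= f k) -> (forall K, sum_f_R0 f K <= B) ->
  exists S, infinite_sum f S /\ S <= B.
Proof.
  intros Hf HB.
  assert (Hg : Un_growing (sum_f_R0 f)) by (intros n; rewrite sumS; specialize (Hf (S n)); lra).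
  assert (Hu : has_ub (sum_f_R0 f)).
  { exists B. intros x [i ->]. apply HB. }
  destruct (growing_cv _ Hg Hu) as [l Hl].
  exists l. split. exact Hl.
  destruct (Rle_dec l B) as [|Hn]; auto. exfalso.
  destruct (Hl (l - B)) as [N HN]. lra.
  specialize (HN N (le_n N)). unfold Rdist in HN. specialize (HB N).
  apply Rabs_def2 in HN. lra.
Qed.

Lemma epsb_SS alpha m : epsb alpha (S (S m)) = Rmin (epsb alpha (S m)) (1 - Cabsx (alpha (S m))).
Proof. reflexivity. Qed.

Lemma epsb_prop alpha n : (1 <= n)%nat -> (forall j, (j < n)%nat -> Cabsx (alpha j) < 1) ->
  0 < epsb alpha n /\ forall j, (j < n)%nat -> epsb alpha n <= 1 - Cabsx (alpha j).
Proof.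
  induction n as [|m IH]; intros H1 Ha. lia.
  destruct m as [|m'].
  - simpl. split. specialize (Ha 0%nat ltac:(lia)); lra.
    intros j Hj. replace j with 0%nat by lia. lra.
  - rewrite epsb_SS. destruct IH as [IH1 IH2]; [lia| intros; apply Ha; lia|].
    split.
    + apply Rmin_case; auto. specialize (Ha (S m') ltac:(lia)); lra.
    + intros j Hj. destruct (Nat.eq_dec j (S m')) as [->|Hne].
      apply Rmin_r. eapply Rle_trans. apply Rmin_l. apply IH2; lia.
Qed.

Fixpoint Cn (m : nat) : R :=
  match m with O => 1 | S m => 18 * Cn m + 24 * (3 ^ m) ^ 2 end.

Lemma bcoefS alpha m : bcoef alpha (S m) = Cconv (bcoef alpha m) (blaschke_coef (alpha m)).
Proof. reflexivity. Qed.

Lemma Rpower_one p : Rpower 1 p = 1.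
Proof. unfold Rpower. rewrite ln_1, Rmult_0_r. apply exp_0. Qed.

Lemma main_bound p alpha n E : 1 <= p < 2 ->
  (forall j, (j < n)%nat -> Cabsx (alpha j) < 1) ->
  1 <= E ->
  (forall j, (j < n)%nat -> Rpower (1 - Cabsx (alpha j)) (1 - p) <= E) ->
  forall m, (m <= n)%nat ->
  (forall K, sum_f_R0 (fun k => Cabsx (bcoef alpha m k)) K <= 3 ^ m) /\
  (forall K, sum_f_R0 (fun k => (wt p k * Cabsx (bcoef alpha m k)) ^ 2) K <= Cn m * E).
Proof.
  intros Hp Ha HE HaE m. induction m as [|m IH]; intros Hm.
  - assert (Z : forall k, Cabsx (bcoef alpha 0 (S k)) = 0) by (intros; apply Cabsx_C0).
    split; intros K.
    + eapply Rle_trans. apply shift_bound with (B := 0).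
      intros m0. rewrite (sum_eq _ (fun _ => 0)) by (intros; apply Z). rewrite sum_cte; lra. lra.
      simpl. rewrite Cabsx_C1. lra.
    + eapply Rle_trans. apply shift_bound with (B := 0).
      intros m0. rewrite (sum_eq _ (fun _ => 0)).
      rewrite sum_cte; lra. intros i _. rewrite Z. ring. lra.
      cbv beta. change (bcoef alpha 0 0) with C1x. rewrite Cabsx_C1, Rmult_1_r, wt_sq. simpl. rewrite Rpower_one. lra.
  - destruct (IH ltac:(lia)) as [IHS IHN].
    set (a := alpha m). assert (Ham : Cabsx a < 1) by (apply Ha; lia).
    set (A := fun k => Cabsx (bcoef alpha m k)).
    assert (HA0 : forall k, 0 <= A k) by (intros; apply Cabsx_ge0).
    assert (Hb0 : forall k, 0 <= beta a k) by (intros; apply beta_ge0).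
    assert (Hw : forall k, 0 < wt p k) by (intros; apply wt_pos).
    assert (Hle : forall k, Cabsx (bcoef alpha (S m) k) <= rconv A (beta a) k).
    { intros k. rewrite bcoefS. apply Cconv_abs. }
    split; intros K.
    + eapply Rle_trans. apply sum_Rle. intros k _. apply Hle.
      replace (3 ^ S m) with (3 ^ m * 3) by (simpl; ring).
      apply L1; auto. apply betaSum; auto.
    + apply Rle_trans with (sum_f_R0 (fun k => 2 * (rconv (fun i => wt p i * A i) (beta a) k) ^ 2
           + 2 * (rconv (fun i => wt p i * beta a i) A k) ^ 2) K).
      * apply sum_Rle; intros k _.
        assert (H1 : wt p k * Cabsx (bcoef alpha (S m) k) <=
                rconv (fun i => wt p i * A i) (beta a) k + rconv (fun i => wt p i * beta a i) A k).
        { eapply Rle_trans. apply Rmult_le_compat_l. left; apply Hw. apply Hle.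
          rewrite (rconv_comm (fun i => wt p i * beta a i)). unfold rconv.
          rewrite <- sum_plus, <- scal_l. apply sum_Rle; intros i Hi.
          pose proof (wt_sub p i k ltac:(lra) Hi). specialize (HA0 i). specialize (Hb0 (k - i)%nat).
          assert (0 <= A i * beta a (k - i)) by nra. nra. }
        assert (H0 : 0 <= wt p k * Cabsx (bcoef alpha (S m) k))
          by (apply Rmult_le_pos; [left; apply Hw | apply Cabsx_ge0]).
        pose proof (pow2_ge_0 (rconv (fun i => wt p i * A i) (beta a) k - rconv (fun i => wt p i * beta a i) A k)).
        nra.
      * rewrite sum_plus, !scal_l. simpl Cn.
        assert (Y1 : sum_f_R0 (fun k => rconv (fun i => wt p i * A i) (beta a) k ^ 2) K <= 3 * 3 * (Cn m * E)).
        { apply Young. intros; apply Rmult_le_pos; [left; apply Hw| auto]. auto.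
          apply betaSum; auto. exact IHN. }
        assert (Y2 : sum_f_R0 (fun k => rconv (fun i => wt p i * beta a i) A k ^ 2) K <= 3 ^ m * 3 ^ m * (12 * E)).
        { apply Young. intros; apply Rmult_le_pos; [left; apply Hw| auto]. auto. exact IHS.
          intros m0. eapply Rle_trans with (sum_f_R0 (fun k => Rpower (INR (k + 1)) p * beta a k ^ 2) m0).
          right. apply sum_eq; intros. rewrite Rpow_mult_distr, wt_sq. reflexivity.
          eapply Rle_trans. apply betaDp; auto; lra.
          assert (Rpower (1 - Cabsx a) (1 - p) <= E) by (apply HaE; lia). lra. }
        nra.
Qed.


Theorem lemma9p3 (p : R) (hp1 : 1 <= p) (hp2 : p < 2) (n : nat) (hn : (1 <= n)%nat) :
  exists C : R,
    forall alpha : nat -> Cx,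
      (forall j, (j < n)%nat -> Cabsx (alpha j) < 1) ->
      exists S : R,
        infinite_sum (Dterm p (bcoef alpha n)) S /\
        S <= C * Rpower (epsb alpha n) (1 - p).
Proof.
  exists (Cn n). intros alpha Ha.
  destruct (epsb_prop alpha n hn Ha) as [He1 He2].
  assert (He3 : epsb alpha n <= 1).
  { pose proof (He2 0%nat ltac:(lia)). pose proof (Cabsx_ge0 (alpha 0%nat)). lra. }
  set (E := Rpower (epsb alpha n) (1 - p)).
  assert (HE : 1 <= E) by (apply Rpower_ge1; lra).
  assert (HaE : forall j, (j < n)%nat -> Rpower (1 - Cabsx (alpha j)) (1 - p) <= E).
  { intros j Hj. apply Rpower_mono_neg; auto. lra. }
  destruct (main_bound p alpha n E ltac:(lra) Ha HE HaE n (le_n n)) as [_ HN].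
  apply conv_series.
  - intros k. unfold Dterm. apply Rmult_le_pos. apply Rpower_ge0. apply Cnorm2_ge0.
  - intros K. eapply Rle_trans; [|apply (HN K)]. right. apply sum_eq. intros k _.
    unfold Dterm. rewrite Rpow_mult_distr, wt_sq, Cabsx_sq. ring.
Qed.
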